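(* Let $\Omega$ be a discrete signature, let $A$ be a profinite $\Omega$-algebra, and let $\theta$ be a closed congruence on $A$ of countable index (i.e., $A/\theta$ is countable). Then the quotient topological algebra $A/\theta$ (with the quotient topology) is profinite.
   Context: A signature is a disjoint union $\Omega=\biguplus_{n\in\mathbb{N}}\Omega_n$; it is discrete if each $\Omega_n$ carries the discrete topology. A topological $\Omega$-algebra is a topological space $A$ with continuous evaluation maps $E_n^A:\Omega_n\times A^n\to A$. Compact spaces are Hausdorff by convention. A topological algebra is profinite if it is compact and, for any two distinct elements, there is a continuous homomorphism into a finite discrete $\Omega$-algebra separating them. A congruence is closed if it is a closed subset of $A\times A$. *)

(* Defs.v *)
From HB Require Import structures.
From mathcomp Require Import all_boot all_algebra generic_quotient.
From mathcomp Require Import boolp classical_sets functions cardinality.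
From mathcomp Require Import topology.

Set Implicit Arguments.
Unset Strict Implicit.
Unset Printing Implicit Defensive.

Local Open Scope classical_set_scope.
Local Open Scope quotient_scope.

(** A discrete signature: for each arity n, a set Omega n of n-ary operation
    symbols, carrying the discrete topology. *)
Definition signature := nat -> discreteTopologicalType.

Section TopAlg.
Variable Omega : signature.

Definition ops (A : Type) := forall n : nat, Omega n -> ('I_n -> A) -> A.

Definition eval_map (A : topologicalType) (E : ops A) (n : nat) :
    (Omega n * {ptws 'I_n -> A})%type -> A :=
  fun p => E n p.1 p.2.

Definition is_topological_algebra (A : topologicalType) (E : ops A) : Prop :=
  forall n : nat, continuous (@eval_map A E n).

Definition is_hom (A B : Type) (EA : ops A) (EB : ops B) (f : A -> B) : Prop :=
  forall (n : nat) (s : Omega n) (a : 'I_n -> A), f (EA n s a) = EB n s (f \o a).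

Definition profinite (A : topologicalType) (E : ops A) : Prop :=
  [/\ is_topological_algebra E, compact [set: A], hausdorff_space A &
    forall x y : A, x <> y ->
      exists (B : discreteTopologicalType) (EB : ops B) (f : A -> B),
        [/\ finite_set [set: B], is_topological_algebra EB, continuous f,
            is_hom E EB f & f x <> f y]].

Record closed_congruence (A : topologicalType) (E : ops A) := ClosedCongruence {
  cong_rel :> A -> A -> Prop;
  cong_refl : forall x, cong_rel x x;
  cong_sym : forall x y, cong_rel x y -> cong_rel y x;
  cong_trans : forall x y z, cong_rel x y -> cong_rel y z -> cong_rel x z;
  cong_compat : forall (n : nat) (s : Omega n) (a b : 'I_n -> A),
      (forall i, cong_rel (a i) (b i)) -> cong_rel (E n s a) (E n s b);
  cong_closed : closed [set p : A * A | cong_rel p.1 p.2]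
}.

Section Quot.
Variables (A : topologicalType) (E : ops A) (theta : closed_congruence E).

Definition cong_brel : rel A := fun x y => `[< theta x y >].

Lemma cong_brel_refl : reflexive cong_brel.
Proof. by move=> x; apply/asboolP; apply: cong_refl. Qed.

Lemma cong_brel_sym : symmetric cong_brel.
Proof.
by move=> x y; apply/asboolP/asboolP; apply: cong_sym.
Qed.

Lemma cong_brel_trans : transitive cong_brel.
Proof.
by move=> y x z /asboolP h1 /asboolP h2; apply/asboolP; apply: cong_trans h1 h2.
Qed.

Definition cong_equiv : equiv_rel A :=
  EquivRel cong_brel cong_brel_refl cong_brel_sym cong_brel_trans.

Definition quot_space : topologicalType :=
  quotient_topology {eq_quot cong_equiv}.

Definition quot_ops : ops quot_space :=
  fun n s q => (\pi_(quot_space) (@E n s (fun i => repr (q i))) : quot_space).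

End Quot.
End TopAlg.

Arguments quot_space {Omega A E} theta.
Arguments quot_ops {Omega A E} theta.
Arguments profinite {Omega A} E.

(* Main.v *)
Require Import Defs.
From HB Require Import structures.
From mathcomp Require Import all_boot all_order all_algebra generic_quotient.
From mathcomp Require Import boolp classical_sets functions cardinality.
From mathcomp Require Import topology.
From mathcomp Require Import reals ereal normedtype measure lebesgue_measure Rstruct.

Set Implicit Arguments.
Unset Strict Implicit.
Unset Printing Implicit Defensive.
Local Open Scope classical_set_scope.
Local Open Scope quotient_scope.
Import Order.TTheory GRing.Theory Num.Theory.
Import numFieldNormedType.Exports.
Section Synt.
Context (Omega : signature) (A : Type) (E : ops Omega A) (V : A -> Prop).

Inductive upoly : (A -> A) -> Prop :=
| up_id : upoly (fun x => x)
| up_step (n : nat) (s : Omega n) (c : 'I_n -> A) (j : 'I_n) (p : A -> A) :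
    upoly p -> upoly (fun x => @E n s (fun i => if i == j then p x else c i)).

Definition synt (x y : A) := forall p, upoly p -> (V (p x) <-> V (p y)).

Lemma upoly_comp q p : upoly q -> upoly p -> upoly (fun x => q (p x)).
Proof.
elim=> [|n s c j q' _ IH] Hp; first exact: Hp.
exact: (up_step s c j (IH Hp)).
Qed.

Lemma synt_refl x : synt x x.
Proof. by move=> p _. Qed.

Lemma synt_sym x y : synt x y -> synt y x.
Proof. by move=> H p Hp; split => /(H p Hp). Qed.

Lemma synt_trans x y z : synt x y -> synt y z -> synt x z.
Proof.
move=> H1 H2 p Hp; split => h.
  by apply/(H2 p Hp)/(H1 p Hp).
by apply/(H1 p Hp)/(H2 p Hp).
Qed.

Lemma synt_upoly p x y : upoly p -> synt x y -> synt (p x) (p y).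
Proof. by move=> Hp H q Hq; exact: (H _ (upoly_comp Hq Hp)). Qed.

Lemma synt_step n s (c : 'I_n -> A) j x y : synt x y ->
  synt (@E n s (fun i => if i == j then x else c i))
       (@E n s (fun i => if i == j then y else c i)).
Proof.
move=> H.
exact: (@synt_upoly (fun z => @E n s (fun i => if i == j then z else c i)) x y
  (up_step s c j up_id) H).
Qed.

Lemma synt_compat n s (a b : 'I_n -> A) :
  (forall i, synt (a i) (b i)) -> synt (@E n s a) (@E n s b).
Proof.
move=> Hab.
pose mix k := fun i : 'I_n => if (i < k)%N then b i else a i.
have H : forall k, (k <= n)%N -> synt (@E n s a) (@E n s (mix k)).
  elim=> [_|k IH kn].
    have -> : mix 0%N = a by apply: funext => i.
    exact: synt_refl.
  apply: (synt_trans (IH (ltnW kn))).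
  pose j := Ordinal kn.
  have e1 : mix k = fun i => if i == j then a j else mix k i.
    apply: funext => i; case: eqP => [->|//].
    by rewrite /mix /= ltnn.
  have e2 : mix k.+1 = fun i => if i == j then b j else mix k i.
    apply: funext => i; case: eqP => [->|ne]; first by rewrite /mix /= ltnSn.
    rewrite /mix ltnS leq_eqVlt.
    have -> : (nat_of_ord i == k) = false.
      by apply/negbTE/eqP => ik; apply: ne; apply: val_inj.
    by [].
  rewrite {1}e1 e2; exact: synt_step.
have := H n (leqnn n).
have -> : mix n = b by apply: funext => i; rewrite /mix ltn_ord.
by [].
Qed.

Lemma cong_upoly (rho : A -> A -> Prop) :
  (forall x, rho x x) ->
  (forall n s (a b : 'I_n -> A), (forall i, rho (a i) (b i)) -> rho (@E n s a) (@E n s b)) ->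
  forall p, upoly p -> forall x y, rho x y -> rho (p x) (p y).
Proof.
move=> Hr Hc p; elim=> [//|n s c j q _ IH] x y /IH Hxy.
by apply: Hc => i; case: eqP.
Qed.

Lemma cong_sub_synt (rho : A -> A -> Prop) :
  (forall x, rho x x) ->
  (forall n s (a b : 'I_n -> A), (forall i, rho (a i) (b i)) -> rho (@E n s a) (@E n s b)) ->
  (forall x y, rho x y -> (V x <-> V y)) ->
  forall x y, rho x y -> synt x y.
Proof.
move=> Hr Hc Hs x y Hxy p Hp; apply: (Hs (p x) (p y)); exact: (cong_upoly Hr Hc Hp).
Qed.

End Synt.
Lemma ptws_discrete_nbhs (n : nat) (B : discreteTopologicalType)
  (q : {ptws 'I_n -> B}) : nbhs q [set q' | q' = q].
Proof.
have Hi : forall i : 'I_n, \forall q' \near q, (fun i (q' : {ptws 'I_n -> B}) => q' i = q i) i q'.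
  move=> i.
  have := @proj_continuous 'I_n (fun _ => B) i q.
  by move=> /(_ _ (discrete_set1 (q i))).
have H := @filter_forall _ 'I_n (fun i (q' : {ptws 'I_n -> B}) => q' i = q i) (nbhs q) (nbhs_filter q) Hi.
apply: filterS H => q' Hq'; exact: funext.
Qed.

Lemma discrete_topalg (Omega : signature) (B : discreteTopologicalType)
  (EB : ops Omega B) : is_topological_algebra EB.
Proof.
move=> n [s q]; apply/discrete_cvg.
have Hq := ptws_discrete_nbhs q.
have Hs := @discrete_set1 (Omega n) s.
exists ([set s], [set q' | q' = q]) => //.
by case=> s' q' /= [-> ->].
Qed.
Definition incl_filter (T : Type) : set_system (seq T) :=
  [set S | exists L0, forall L, List.incl L0 L -> S L].

Lemma incl_filter_filter (T : Type) : Filter (@incl_filter T).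
Proof.
split.
- by exists nil.
- move=> P Q [L1 H1] [L2 H2]; exists (L1 ++ L2) => L HL; split.
    by apply: H1 => h hin; apply: HL; apply: List.in_or_app; left.
  by apply: H2 => h hin; apply: HL; apply: List.in_or_app; right.
- by move=> P Q PQ [L0 H]; exists L0 => L /H /PQ.
Qed.

Lemma finite_In (T : Type) (L : seq T) : finite_set [set x | List.In x L].
Proof.
elim: L => [|a L IH].
  have -> : [set x | List.In x [::]] = set0 :> set T by apply/seteqP; split.
  exact: finite_set0.
have -> : [set x | List.In x (a :: L)] = [set a] `|` [set x | List.In x L].
  by apply/seteqP; split => x /=; case; by [left|right].
by rewrite finite_setU; split => //; exact: finite_set1.
Qed.

Lemma discrete_compact_finite (X : discreteTopologicalType) (K : set X) :
  compact K -> finite_set K.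
Proof.
move=> /compact_near_coveringP cK.
have := cK _ (@incl_filter X) (fun L x => List.In x L) (@incl_filter_filter X).
case.
  move=> x Kx; exists ([set x], [set L | List.In x L]).
    split; first exact: discrete_set1.
    by exists [:: x] => L HL; apply: HL; left.
  by case=> z L /= [-> ?].
move=> L0 HL0; apply: (sub_finite_set _ (finite_In L0)).
exact: (HL0 L0 (List.incl_refl _)).
Qed.

Record KD (Omega : signature) (A : topologicalType) (E : ops Omega A) := MkKD {
  kr : A -> A -> Prop;
  krefl : forall x, kr x x;
  ksym : forall x y, kr x y -> kr y x;
  kcompat : forall n s (a b : 'I_n -> A),
    (forall i, kr (a i) (b i)) -> kr (@E n s a) (@E n s b);
  kopen : forall x, nbhs x [set y | kr x y] }.

Lemma hom_KD (Omega : signature) (A : topologicalType) (E : ops Omega A)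
  (B : discreteTopologicalType) (EB : ops Omega B) (f : A -> B) :
  continuous f -> is_hom E EB f ->
  { k : KD E | forall x y, kr k x y <-> f x = f y }.
Proof.
move=> cf hf.
have r : forall x, f x = f x by [].
have sy : forall x y, f x = f y -> f y = f x by [].
have co : forall n s (a b : 'I_n -> A),
    (forall i, f (a i) = f (b i)) -> f (@E n s a) = f (@E n s b).
  move=> n s a b H; rewrite !hf; congr (EB n s _); apply: funext => i /=.
  exact: H.
have op : forall x, nbhs x [set y | f x = f y].
  move=> x; apply: filterS (cf x _ (discrete_set1 (f x))) => y /= ->; by [].
by exists (MkKD r sy co op).
Qed.

Lemma profinite_list (Omega : signature) (A : topologicalType) (E : ops Omega A)
  (V : set A) : profinite E -> open V -> closed V ->
  exists L : seq (KD E), forall x y, V x -> ~ V y ->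
    exists2 k, List.In k L & ~ kr k x y.
Proof.
case=> _ cptA _ sep oV clV.
have cV : compact V := subclosed_compact clV cptA (@subsetT _ V).
have cVc : compact (~` V) :=
  subclosed_compact (open_closedC oV) cptA (@subsetT _ (~` V)).
have /compact_near_coveringP cX := compact_setX cV cVc.
pose F : set_system (seq (KD E)) :=
  [set S | exists L0, forall L, List.incl L0 L -> S L].
have FF : Filter F.
  split.
  - by exists nil.
  - move=> P Q [L1 H1] [L2 H2]; exists (L1 ++ L2) => L HL; split.
      by apply: H1 => h hin; apply: HL; apply: List.in_or_app; left.
    by apply: H2 => h hin; apply: HL; apply: List.in_or_app; right.
  - by move=> P Q PQ [L0 H]; exists L0 => L /H /PQ.
have := cX _ F (fun L (z : A * A) => exists2 k, List.In k L & ~ kr k z.1 z.2) FF.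
case.
  move=> [x y] [Vx nVy].
  have xy : x <> y by move=> e; apply: nVy; rewrite -e.
  have [B [EB [f [_ _ cf hf_ fxy]]]] := sep x y xy.
  have [k Hk] := hom_KD cf hf_.
  exists ([set z | f z.1 = f x /\ f z.2 = f y], [set L | List.In k L]).
    split; rewrite /=.
      exists ([set u | f u = f x], [set v | f v = f y]).
        split; rewrite /=.
          exact: (cf x _ (discrete_set1 (f x))).
        exact: (cf y _ (discrete_set1 (f y))).
      by case=> u v /= [-> ->].
    by exists [:: k] => L HL; apply: HL; left.
  case=> z L /= [[e1 e2] hL]; exists k => //=.
  by rewrite Hk e1 e2.
move=> L0 HL0; exists L0 => x y Vx nVy.
exact: (HL0 L0 (List.incl_refl _) (x, y) (conj Vx nVy)).
Qed.
Lemma list_nbhs (Omega : signature) (A : topologicalType) (E : ops Omega A)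
  (L : seq (KD E)) (x : A) :
  nbhs x [set y | forall k, List.In k L -> kr k x y].
Proof.
elim: L => [|k L IH]; first by apply: nearW => y k [].
apply: filterS (filterI (kopen k x) IH) => y [h1 h2] k' /= [<-|kL] //.
exact: h2.
Qed.

Lemma profinite_synt_open (Omega : signature) (A : topologicalType)
  (E : ops Omega A) (V : set A) : profinite E -> open V -> closed V ->
  forall x, nbhs x [set y | synt E V x y].
Proof.
move=> pA oV clV x; have [L HL] := profinite_list pA oV clV.
pose rho x y := forall k, List.In k L -> kr k x y.
have rr : forall x, rho x x by move=> z k _; exact: krefl.
have rc : forall n s (a b : 'I_n -> A), (forall i, rho (a i) (b i)) ->
    rho (@E n s a) (@E n s b).
  by move=> n s a b H k kL; apply: kcompat => i; exact: H i k kL.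
have rs : forall x y, rho x y -> (V x <-> V y).
  move=> u v H; split => Vu; apply: contrapT => nV.
    by have [k kL nk] := HL u v Vu nV; exact: nk (H k kL).
  by have [k kL nk] := HL v u Vu nV; exact: nk (ksym (H k kL)).
apply: filterS (list_nbhs L x) => y Hy.
exact: (cong_sub_synt rr rc rs Hy).
Qed.

Section FinQuot.
Context (Omega : signature) (A : topologicalType) (E : ops Omega A) (V : set A).
Hypothesis Hopen : forall x, nbhs x [set y | synt E V x y].
Hypothesis cptA : compact [set: A].

Definition synt_rel : rel A := fun x y => `[< synt E V x y >].

Lemma synt_rel_refl : reflexive synt_rel.
Proof. by move=> x; apply/asboolP; exact: synt_refl. Qed.
Lemma synt_rel_sym : symmetric synt_rel.
Proof. by move=> x y; apply/asboolP/asboolP; exact: synt_sym. Qed.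
Lemma synt_rel_trans : transitive synt_rel.
Proof.
by move=> y x z /asboolP h1 /asboolP h2; apply/asboolP; exact: synt_trans h1 h2.
Qed.

Definition synt_equiv : equiv_rel A :=
  EquivRel synt_rel synt_rel_refl synt_rel_sym synt_rel_trans.

Definition BQ := {eq_quot synt_equiv}.
Definition BT : discreteTopologicalType := discrete_topology BQ.
Definition piB (x : A) : BT := (\pi_BQ x)%qT.
Definition EB : ops Omega BT :=
  fun n s q => piB (@E n s (fun i => repr (q i : BQ))).

Lemma piB_eq x y : piB x = piB y <-> synt E V x y.
Proof.
rewrite /piB; split => [/eqmodP/asboolP //|H].
by apply/eqmodP/asboolP.
Qed.

Lemma piB_repr x : synt E V (repr (piB x : BQ)) x.
Proof. by apply/piB_eq; rewrite /piB reprK. Qed.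

Lemma piB_hom : is_hom E EB piB.
Proof.
move=> n s a; rewrite /EB; apply/piB_eq; apply: synt_compat => i.
exact/synt_sym/piB_repr.
Qed.

Lemma piB_cont : continuous piB.
Proof.
move=> x; apply/discrete_cvg; apply: filterS (Hopen x) => y H /=.
by apply/piB_eq; exact: synt_sym.
Qed.

Lemma piB_surj (q : BT) : piB (repr (q : BQ)) = q.
Proof. by rewrite /piB reprK. Qed.

Lemma BT_finite : finite_set [set: BT].
Proof.
have -> : [set: BT] = piB @` [set: A].
  by apply/seteqP; split => // q _; exists (repr (q : BQ)) => //; exact: piB_surj.
apply: discrete_compact_finite; apply: continuous_compact cptA.
exact: continuous_subspaceT piB_cont.
Qed.

End FinQuot.
Section QuotFacts.
Context (Omega : signature) (A : topologicalType) (E : ops Omega A)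
  (theta : closed_congruence E).
Hypothesis cptA : compact [set: A].
Hypothesis hausA : hausdorff_space A.

Local Notation Q := (quot_space theta).
Definition piQ (x : A) : Q := \pi_Q x.

Lemma piQ_eq x y : piQ x = piQ y <-> theta x y.
Proof.
rewrite /piQ; split => [/eqmodP/asboolP //|H].
by apply/eqmodP/asboolP.
Qed.

Lemma piQ_repr (q : Q) : piQ (repr q) = q.
Proof. by rewrite /piQ reprK. Qed.

Lemma piQ_cont : continuous piQ.
Proof. exact: pi_continuous. Qed.

Lemma sat_closed (K : set A) :
  closed K -> closed [set x | exists2 y, K y & theta x y].
Proof.
move=> clK x clx; apply: contrapT => nx.
have /compact_near_coveringP cK : compact K :=
  subclosed_compact clK cptA (@subsetT _ K).
have Hn : \forall i \near x, K `<=` (fun y => ~ theta i y).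
  apply: (cK A (nbhs x) (fun i y => ~ theta i y) (nbhs_filter x)).
  move=> y Ky.
  have o : open (~` [set p : A * A | theta p.1 p.2]) :=
    closed_openC (@cong_closed _ _ _ theta).
  have nxy : (~` [set p : A * A | theta p.1 p.2]) (x, y).
    by move=> /= txy; apply: nx; exists y.
  have := open_nbhs_nbhs (conj o nxy).
  case=> [[U W] [Ux Wy] UW].
  exists (W, U) => //.
  by case=> y' i /= [Wy' Ui] tiy; exact: (UW (i, y') (conj Ui Wy')).
have [z [[y Ky tzy] Hz]] := clx _ Hn.
exact: Hz y Ky tzy.
Qed.

Lemma Q_compact : compact [set: Q].
Proof.
have -> : [set: Q] = piQ @` [set: A].
  by apply/seteqP; split => // q _; exists (repr q) => //; exact: piQ_repr.
apply: continuous_compact cptA.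
exact: continuous_subspaceT piQ_cont.
Qed.

Lemma Q_open (U : set Q) : open (piQ @^-1` U) -> open U.
Proof. by []. Qed.

Lemma Q_closed1 (q : Q) : closed [set q].
Proof.
rewrite -openC; apply: Q_open.
have -> : piQ @^-1` (~` [set q]) =
    ~` [set x | exists2 y, [set repr q] y & theta x y].
  apply/seteqP; split => x /=.
    move=> nq [y -> t]; apply: nq; rewrite -(piQ_repr q); exact/piQ_eq.
  move=> H e; apply: H; exists (repr q) => //; apply/piQ_eq.
  by rewrite piQ_repr.
apply: closed_openC; apply: sat_closed.
exact: (compact_closed hausA (@compact_set1 _ (repr q))).
Qed.

Lemma Q_normal (R : realType) : normal_space Q.
Proof.
apply/(@normal_openP R) => F G clF clG FG0.
have clpre : forall H : set Q, closed H -> closed (piQ @^-1` H).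
  move=> H clH; rewrite -openC preimage_setC.
  by have := closed_openC clH.
have nA : normal_space A := compact_normal hausA cptA.
have FG0' : piQ @^-1` F `&` piQ @^-1` G = set0.
  by rewrite -preimage_setI FG0 preimage_set0.
have [U0 [V0 [oU0 oV0 FU0 GV0 UV0]]] := (@normal_openP R A).1 nA
  (piQ @^-1` F) (piQ @^-1` G) (clpre _ clF) (clpre _ clG) FG0'.
have sat_open : forall W0 : set A, open W0 ->
    open [set q : Q | forall x, piQ x = q -> W0 x].
  move=> W0 oW0; apply: Q_open.
  have -> : piQ @^-1` [set q : Q | forall x, piQ x = q -> W0 x] =
      ~` [set x | exists2 y, (~` W0) y & theta x y].
    apply/seteqP; split => x /=.
      move=> H [y nW0 txy]; apply: nW0; apply: H; apply/piQ_eq.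
      exact: cong_sym.
    move=> H y e; apply: contrapT => nW0; apply: H; exists y => //.
    exact/piQ_eq.
  by apply: closed_openC; apply: sat_closed; exact: open_closedC.
exists [set q : Q | forall x, piQ x = q -> U0 x],
       [set q : Q | forall x, piQ x = q -> V0 x]; split.
- exact: sat_open.
- exact: sat_open.
- by move=> q Fq x e; apply: FU0; rewrite /= e.
- by move=> q Gq x e; apply: GV0; rewrite /= e.
- apply/seteqP; split => // q [Uq Vq].
  have e := piQ_repr q.
  have : (U0 `&` V0) (repr q) by split; [exact: Uq e|exact: Vq e].
  by rewrite UV0.
Qed.

End QuotFacts.
Lemma exists_notin (R : realType) (S : set R) : countable S ->
  exists r : R, [/\ (0 < r)%R, (r < 1)%R & ~ S r].
Proof.
move=> cS; apply: contrapT => H.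
have sub : `]0%R, 1%R[ `<=` S.
  move=> r; rewrite set_itvoo => Hr; have /andP[r0 r1] : (0 < r < 1)%R := Hr.
  by apply: contrapT => nS; apply: H; exists r.
have c : countable `]0%R, 1%R[ := sub_countable (subset_card_le sub) cS.
have := countable_lebesgue_measure0 c.
rewrite lebesgue_measure_itv /= lte_fin ltr01 oppr0 adde0.
by move=> /eqP; rewrite eqe oner_eq0.
Qed.
Lemma cont_by_sep (Q Y : topologicalType) (h : Y -> Q) :
  compact [set: Q] ->
  (forall z w : Q, z <> w -> exists (B : discreteTopologicalType) (g : Q -> B),
     [/\ continuous g, (forall y0, nbhs y0 [set y | g (h y) = g (h y0)])
       & g z <> g w]) ->
  continuous h.
Proof.
move=> cQ Hsep y S Sy.
have Uy : (S°) (h y) := Sy.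
have clK : closed (~` S°) := open_closedC (@open_interior _ S).
have /compact_near_coveringP cK : compact (~` S°) :=
  subclosed_compact clK cQ (@subsetT _ _).
have Hn : \forall i \near y, (~` S°) `<=` (fun z => h i <> z).
  apply: (cK Y (nbhs y) (fun i z => h i <> z) (nbhs_filter y)).
  move=> z Kz.
  have zy : z <> h y by move=> e; apply: Kz; rewrite e.
  have [B [g [cg Hg gzy]]] := Hsep z (h y) zy.
  exists ([set z' | g z' = g z], [set i | g (h i) = g (h y)]).
    split; first exact: (cg z _ (discrete_set1 (g z))).
    exact: Hg.
  case=> z' i /= [e1 e2] e; apply: gzy; by rewrite -e1 -e e2.
apply: filterS Hn => i Hi /=.
apply: (@interior_subset _ S); apply: contrapT => nU.
exact: (Hi (h i) nU).
Qed.

Section QuotMain.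
Context (Omega : signature) (A : topologicalType) (E : ops Omega A)
  (theta : closed_congruence E).
Hypothesis pA : profinite E.
Hypothesis cQ : countable [set: quot_space theta].

Local Notation Q := (quot_space theta).

Lemma Q_sep_clopen_R (R : realType) (q1 q2 : Q) : q1 <> q2 ->
  exists W : set A, [/\ open W, closed W, W (repr q1), ~ W (repr q2)
    & forall x y, theta x y -> (W x <-> W y)].
Proof.
move=> q12; case: pA => _ cptA hausA _.
have nQ := @Q_normal _ _ _ theta cptA hausA R.
have disj : [set q1] `&` [set q2] = set0 :> set Q.
  by apply/seteqP; split => // q [/= -> e]; exact: q12 e.
have us := (@normal_separatorP R Q).1 nQ _ _
  (@Q_closed1 _ _ _ theta cptA hausA q1) (@Q_closed1 _ _ _ theta cptA hausA q2) disj.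
have [f [cf _ f0 f1]] := (@uniform_separatorP Q R _ _).1 us.
have fq1 : f q1 = 0%R by apply: f0; exists q1.
have fq2 : f q2 = 1%R by apply: f1; exists q2.
have cS : countable (range f).
  exact: sub_countable (card_image_le f [set: Q]) cQ.
have [r [r0 r1 nr]] := exists_notin cS.
have cfp : continuous (f \o piQ theta).
  move=> x; apply: continuous_comp; [exact: piQ_cont | exact: cf].
exists [set x | (f (piQ theta x) < r)%R]; split.
- exact ((continuousP _).1 cfp _ (@open_lt R r)).
- have -> : [set x | (f (piQ theta x) < r)%R] =
      ~` [set x | (r < f (piQ theta x))%R].
    apply/seteqP; split => x /=.
      by move=> H H'; have := lt_trans H H'; rewrite ltxx.
    move=> H; case: (ltgtP (f (piQ theta x)) r) => //.
      all: try by move=> H'; exfalso; exact: H H'.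
    by move=> e; exfalso; apply: nr; exists (piQ theta x).
  exact (open_closedC ((continuousP _).1 cfp _ (@open_gt R r))).
- by rewrite /= piQ_repr fq1.
- by rewrite /= piQ_repr fq2 => H; have := lt_trans H r1; rewrite ltxx.
- by move=> x y /(piQ_eq theta) /= ->.
Qed.

Lemma Q_sep_clopen (q1 q2 : Q) : q1 <> q2 ->
  exists W : set A, [/\ open W, closed W, W (repr q1), ~ W (repr q2)
    & forall x y, theta x y -> (W x <-> W y)].
Proof. exact: (@Q_sep_clopen_R Rdefinitions.R). Qed.

Lemma Q_sep_hom (q1 q2 : Q) : q1 <> q2 ->
  exists (B : discreteTopologicalType) (EB : ops Omega B) (g : Q -> B),
    [/\ finite_set [set: B], is_topological_algebra EB, continuous g,
        is_hom (quot_ops theta) EB g & g q1 <> g q2].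
Proof.
move=> q12; have [W [oW clW W1 nW2 satW]] := Q_sep_clopen q12.
have cptA : compact [set: A] by case: pA.
have Hopen := profinite_synt_open pA oW clW.
have thsyn : forall x y, theta x y -> synt E W x y.
  exact: (cong_sub_synt (@cong_refl _ _ _ theta) (@cong_compat _ _ _ theta) satW).
have threpr : forall x, theta (repr (piQ theta x)) x.
  by move=> x; apply/(piQ_eq theta); rewrite piQ_repr.
pose g (q : Q) : BT E W := piB E W (repr q).
exists (BT E W), (@EB _ _ E W), g; split.
- exact: BT_finite Hopen cptA.
- exact: discrete_topalg.
- apply/quotient_continuous.
  have -> : g \o \pi_Q = piB E W.
    apply: funext => x; rewrite /g /=; apply/piB_eq; apply: thsyn.
    exact: threpr.
  exact: piB_cont Hopen.
- move=> n s q; rewrite /g /quot_ops /EB; apply/piB_eq.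
  apply: (synt_trans (thsyn _ _ (threpr _))).
  apply: synt_compat => i; exact/synt_sym/piB_repr.
- move=> /piB_eq H; have [h _] := H (fun x => x) (up_id _).
  exact: nW2 (h W1).
Qed.

End QuotMain.

Theorem corollary3p3 (Omega : signature) (A : topologicalType) (E : ops Omega A)
    (theta : closed_congruence E) :
  profinite E ->
  countable [set: quot_space theta] ->
  profinite (quot_ops theta).
Proof.
move=> pA cQ.
have [_ cptA hausA _] := pA.
have sep := Q_sep_hom pA cQ.
have cQc := @Q_compact _ _ _ theta cptA.
split => //.
- move=> n; apply: cont_by_sep cQc _ => z w zw.
  have [B [EB [g [_ _ cg hg gzw]]]] := sep z w zw.
  exists B, g; split => //.
  move=> [s q].
  have Hi : forall i : 'I_n, \forall q' \near q,
      (fun i (q' : {ptws 'I_n -> quot_space theta}) => g (q' i) = g (q i)) i q'.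
    move=> i.
    have := @proj_continuous 'I_n (fun _ => quot_space theta) i q.
    by move=> /(_ _ (cg (q i) _ (discrete_set1 (g (q i))))).
  have Hq := @filter_forall _ 'I_n
    (fun i (q' : {ptws 'I_n -> quot_space theta}) => g (q' i) = g (q i))
    (nbhs q) (nbhs_filter q) Hi.
  exists ([set s], [set q' | forall i, g (q' i) = g (q i)]).
    split; [exact: discrete_set1 | exact: Hq].
  case=> s' q' /= [-> Hq']; rewrite /eval_map /= !hg.
  by congr (EB n s _); apply: funext => i /=; exact: Hq'.
- rewrite open_hausdorff => x y /eqP xy.
  have [B [EB [g [_ _ cg hg gxy]]]] := sep x y xy.
  exists (g @^-1` [set g x], g @^-1` [set g y]).
    by split; rewrite /= inE.
  split.
  + exact: ((continuousP _).1 cg _ (discrete_open _)).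
  + exact: ((continuousP _).1 cg _ (discrete_open _)).
  + apply/eqP; apply/seteqP; split => // z [/= e1 e2]; apply: gxy.
    by rewrite -e1 -e2.
Qed.
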